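(* Let $(\mathcal{N},P_S)$ be the $Z_0/Z_1$ channel and $(\mathcal{N}^{\mathrm{CSIR}},P_S)$ its associated channel with CSIR. Then $$\eta^{\mathrm{NS},\mathrm{ca}}_{\mathrm{opt},M=2,n=2}(\mathcal{N}^{\mathrm{CSIR}},P_S)\ \ge\ \eta^{\mathrm{C},\mathrm{ca}}_{\mathrm{opt},M=2,n=2}(\mathcal{N}^{\mathrm{CSIR}},P_S)\ \ge\ \tfrac78,$$ and $$\eta^{\mathrm{NS},\mathrm{ca}}_{\mathrm{opt},M=2,n=2}(\mathcal{N},P_S)\ \le\ \tfrac{13}{16}.$$
   Context: A channel with state $(\mathcal{N},P_S)$ consists of finite sets $\mathcal{X},\mathcal{Y},\mathcal{S}$, a conditional distribution $\mathcal{N}(y\mid x,s)$ and a state distribution $P_S$; over $n$ uses, $P_S^{\otimes n}(s^n)=\prod_i P_S(s_i)$ and $\mathcal{N}^{\otimes n}(y^n\mid x^n,s^n)=\prod_i\mathcal{N}(y_i\mid x_i,s_i)$. Notation: $x^i=(x_1,\dots,x_i)$, $x_{i+1}^n=(x_{i+1},\dots,x_n)$, $[M]=\{1,\dots,M\}$. The $Z_0/Z_1$ channel: $\mathcal{X}=\mathcal{Y}=\mathcal{S}=\{0,1\}$, $P_S(0)=P_S(1)=1/2$, $\mathcal{N}(0\mid0,0)=1$, $\mathcal{N}(1\mid0,0)=0$, $\mathcal{N}(0\mid1,0)=\mathcal{N}(1\mid1,0)=1/2$, $\mathcal{N}(1\mid1,1)=1$, $\mathcal{N}(0\mid1,1)=0$,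 $\mathcal{N}(0\mid0,1)=\mathcal{N}(1\mid0,1)=1/2$. The associated channel with CSIR $(\mathcal{N}^{\mathrm{CSIR}},P_S)$ is the channel with state having the same input and state alphabets, output alphabet $\mathcal{Y}\times\mathcal{S}$, the same $P_S$, and $\mathcal{N}^{\mathrm{CSIR}}((y,s^R)\mid x,s)=\mathcal{N}(y\mid x,s)\,\mathbb{I}[s^R=s]$. A classical coding scheme with causal CSIT with message size $M$ and blocklength $n$ consists of a shared random variable $Q$ on a finite set with distribution $P_Q$, an encoder $E(x^n\mid w,s^n,q)=\prod_{j=1}^n E(x_j\mid x^{j-1},w,s^j,q)$, and a decoder $D(\hat w\mid y^n,q)$; its success probability is $\eta=\frac1M\sum_w\sum_q P_Q(q)\sum_{x^n,s^n,y^n}P_S^{\otimes n}(s^n)E(x^n\mid w,s^n,q)\mathcal{N}^{\otimes n}(y^n\mid x^n,s^n)D(w\mid y^n,q)$ (with $\mathcal{N}$ replaced by the channel under consideration). An NS-assisted coding scheme with causal CSIT with message size $M$ and blocklength $n$ is a conditional distribution $Z(x^n,\hat w\mid w,s^n,y^n)$ on $\mathcal{X}^n\times[M]$ given $(w,s^n,y^n)\in[M]\times\mathcal{S}^n\times\mathcal{Y}^n$ such that: (C1) $\sum_{\hat w}Z(x^n,\hat w\mid w,s^n,y^n)$ does not depend on $y^n$; (C2) $\sum_{x^n}Z(x^n,\hat w\mid w,s^n,y^n)$ does not depend on $(w,s^n)$; (C3) for each $i\in[n-1]$, $\sum_{x_{i+1}^n}Z(x^n,\hat w\mid w,s^n,y^n)$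 does not depend on $s_{i+1}^n$. (For the CSIR channel, $\mathcal{Y}$ is replaced by $\mathcal{Y}\times\mathcal{S}$.) Its success probability is $\eta(Z)=\frac1M\sum_{w}\sum_{x^n,s^n,y^n}P_S^{\otimes n}(s^n)\mathcal{N}^{\otimes n}(y^n\mid x^n,s^n)Z(x^n,w\mid w,s^n,y^n)$. $\eta^{\mathrm{C},\mathrm{ca}}_{\mathrm{opt},M,n}$ and $\eta^{\mathrm{NS},\mathrm{ca}}_{\mathrm{opt},M,n}$ denote the suprema of the success probability over all classical, respectively NS-assisted, coding schemes with causal CSIT with message size $M$ and blocklength $n$ for the indicated channel. *)

(* Defs.v *)
From HB Require Import structures.
From mathcomp Require Import all_boot all_order all_algebra.
From mathcomp Require Import boolp classical_sets reals.
Set Implicit Arguments. Unset Strict Implicit. Unset Printing Implicit Defensive.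
Import Order.TTheory GRing.Theory Num.Theory.
Local Open Scope ring_scope.

Section Channels.
Variable R : realType.

(* Words of length n over an alphabet A: x^n = (x_1,...,x_n), indexed by 'I_n
   (0-based: coordinate k : 'I_n stands for x_{k+1}). *)
Definition word (n : nat) (A : finType) := {ffun 'I_n -> A}.

(* A channel with state: Nch x s y = N(y | x, s); PS s = P_S(s). *)
Variables (X Y S : finType).

Definition PSn (PS : S -> R) n (s : word n S) : R := \prod_(i < n) PS (s i).
Definition Nn (Nch : X -> S -> Y -> R) n (x : word n X) (s : word n S)
  (y : word n Y) : R := \prod_(i < n) Nch (x i) (s i) (y i).

(* Classical coding scheme with causal CSIT, message set [M] = 'I_M,
   blocklength n, shared randomness Q on the finite set Q.
   enc j x w s q xj = E(x_j | x^{j-1}, w, s^j, q) ; it is given the full words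
   x, s but must only depend on x_k (k < j) and s_k (k <= j) (causality).
   dec y q w' = D(w' | y^n, q). *)
Record cscheme (M n : nat) (Q : finType) := CScheme {
  PQ : Q -> R;
  enc : 'I_n -> word n X -> 'I_M -> word n S -> Q -> X -> R;
  dec : word n Y -> Q -> 'I_M -> R;
  PQ_ge0 : forall q, 0 <= PQ q;
  PQ_sum : \sum_q PQ q = 1;
  enc_ge0 : forall j x w s q xj, 0 <= enc j x w s q xj;
  enc_sum : forall j x w s q, \sum_xj enc j x w s q xj = 1;
  enc_causal : forall (j : 'I_n) (x x' : word n X) w (s s' : word n S) q xj,
      (forall k : 'I_n, (k < j)%N -> x k = x' k) ->
      (forall k : 'I_n, (k <= j)%N -> s k = s' k) ->
      enc j x w s q xj = enc j x' w s' q xj;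
  dec_ge0 : forall y q w', 0 <= dec y q w';
  dec_sum : forall (y : word n Y) q, \sum_w' dec y q w' = 1
}.

Definition encn M n Q (c : cscheme M n Q) (x : word n X) w s q : R :=
  \prod_(j < n) enc c j x w s q (x j).

Definition succ_C (PS : S -> R) (Nch : X -> S -> Y -> R) M n Q
  (c : cscheme M n Q) : R :=
  M%:R^-1 * \sum_(w : 'I_M) \sum_(q : Q) PQ c q *
    \sum_(x : word n X) \sum_(s : word n S) \sum_(y : word n Y)
      PSn PS s * encn c x w s q * Nn Nch x s y * dec c y q w.

Definition eta_C_opt (PS : S -> R) (Nch : X -> S -> Y -> R) (M n : nat) : R :=
  sup [set r | exists (Q : finType) (c : cscheme M n Q), r = succ_C PS Nch c].

(* NS-assisted coding scheme with causal CSIT: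
   Z w s y x w' = Z(x^n, w' | w, s^n, y^n). *)
Record nsscheme (M n : nat) := NSScheme {
  Zns : 'I_M -> word n S -> word n Y -> word n X -> 'I_M -> R;
  Z_ge0 : forall w s y x w', 0 <= Zns w s y x w';
  Z_sum : forall w (s : word n S) (y : word n Y), \sum_x \sum_w' Zns w s y x w' = 1;
  Z_C1 : forall w (s : word n S) (y y' : word n Y) (x : word n X),
      \sum_w' Zns w s y x w' = \sum_w' Zns w s y' x w';
  Z_C2 : forall w w' (s s' : word n S) (y : word n Y) wh,
      \sum_x Zns w s y x wh = \sum_x Zns w' s' y x wh;
  Z_C3 : forall (i : nat), (1 <= i)%N -> (i <= n - 1)%N ->
      forall w (s s' : word n S) (y : word n Y) (x : word n X) wh,
      (forall k : 'I_n, (k < i)%N -> s k = s' k) ->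
      \sum_(x' : word n X | [forall k : 'I_n, (k < i)%N ==> (x' k == x k)])
          Zns w s y x' wh =
      \sum_(x' : word n X | [forall k : 'I_n, (k < i)%N ==> (x' k == x k)])
          Zns w s' y x' wh
}.

Definition succ_NS (PS : S -> R) (Nch : X -> S -> Y -> R) M n
  (Z : nsscheme M n) : R :=
  M%:R^-1 * \sum_(w : 'I_M)
    \sum_(x : word n X) \sum_(s : word n S) \sum_(y : word n Y)
      PSn PS s * Nn Nch x s y * Zns Z w s y x w.

Definition eta_NS_opt (PS : S -> R) (Nch : X -> S -> Y -> R) (M n : nat) : R :=
  sup [set r | exists Z : nsscheme M n, r = succ_NS PS Nch Z].

End Channels.

Definition csir (R : realType) (X Y S : finType) (Nch : X -> S -> Y -> R)
  : X -> S -> (Y * S)%type -> R :=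
  fun x s ys => Nch x s ys.1 * (ys.2 == s)%:R.

(* The Z0/Z1 channel: X = Y = S = bool (false = 0, true = 1). *)
Definition PS_Z01 (R : realType) : bool -> R := fun _ => 2^-1.
Definition N_Z01 (R : realType) : bool -> bool -> bool -> R :=
  fun x s y => if x == s then (y == x)%:R else 2^-1.

(* Main.v *)
Require Import Defs.
From HB Require Import structures.
From mathcomp Require Import all_boot all_order all_algebra.
From mathcomp Require Import boolp classical_sets reals.
From mathcomp Require Import lra ring.
Import Order.TTheory GRing.Theory Num.Theory.
Local Open Scope ring_scope.

Definition o1 : 'I_2 := @Ordinal 2 1 isT.
Definition w2 {A : finType} (a b : A) : word 2 A :=
  [ffun i : 'I_2 => if val i == 0%N then a else b].
Arguments w2 : simpl never.
Arguments o1 : simpl never.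
Lemma w2_0 (A : finType) (a b : A) : w2 a b ord0 = a.
Proof. by rewrite ffunE. Qed.
Lemma w2_1 (A : finType) (a b : A) : w2 a b o1 = b.
Proof. by rewrite ffunE. Qed.
Lemma w2K {A : finType} (x : word 2 A) : w2 (x ord0) (x o1) = x.
Proof. by apply/ffunP => -[[|[|//]] Hi]; rewrite ffunE /=; congr (x _); apply/val_inj. Qed.
Lemma sum_w2 (R : realType) (A : finType) (F : word 2 A -> R) :
  \sum_(x : word 2 A) F x = \sum_(a : A) \sum_(b : A) F (w2 a b).
Proof.
rewrite pair_bigA /=.
rewrite (reindex (fun p : A * A => w2 p.1 p.2)) //=.
exists (fun x : word 2 A => (x ord0, x o1)) => [[a b] _|x _] /=.
  by rewrite w2_0 w2_1.
by rewrite w2K.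
Qed.
Lemma sum_I2 (R : realType) (F : 'I_2 -> R) : \sum_(i < 2) F i = F ord0 + F o1.
Proof. rewrite big_ord_recl big_ord1; congr (_ + F _); exact/val_inj. Qed.
Lemma prod_I2 (R : realType) (F : 'I_2 -> R) : \prod_(i < 2) F i = F ord0 * F o1.
Proof. rewrite big_ord_recl big_ord1; congr (_ * F _); exact/val_inj. Qed.
Lemma sum_filt1 (R : realType) (A : finType) (F : word 2 A -> R) (x : word 2 A) :
  \sum_(x' : word 2 A | [forall k : 'I_2, (k < 1)%N ==> (x' k == x k)]) F x'
  = \sum_(b : A) F (w2 (x ord0) b).
Proof.
rewrite big_mkcond sum_w2 (bigD1 (x ord0)) //= [X in _ + X]big1 ?addr0.
  apply: eq_bigr => b _; rewrite ifT //; apply/forallP => -[[|//] Hk] /=.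
  by rewrite (_ : Ordinal Hk = ord0) ?w2_0 //; apply/val_inj.
move=> a Ha; apply: big1 => b _; rewrite ifF //; apply/negbTE/negP => /forallP/(_ ord0).
by rewrite /= w2_0 (negbTE Ha).
Qed.
Lemma C3h (A : finType) (a b c : A) :
  forall k : 'I_2, (k < 1)%N -> w2 a b k = w2 a c k.
Proof. by move=> -[[|//] Hk] _; rewrite !ffunE. Qed.

Lemma sum_bool (R : realType) (F : bool -> R) : \sum_(b : bool) F b = F true + F false.
Proof. exact: big_bool. Qed.
Lemma prod_bool (R : realType) (F : bool -> R) : \prod_(b : bool) F b = F true * F false.
Proof. exact: big_bool. Qed.

Lemma sum_unit (R : realType) (F : unit -> R) : \sum_(q : unit) F q = F tt.
Proof. by rewrite (big_pred1 tt) // => -[]. Qed.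
Lemma sum_pair (R : realType) (A B : finType) (F : A * B -> R) :
  \sum_(p : A * B) F p = \sum_(a : A) \sum_(b : B) F (a, b).
Proof. by rewrite pair_bigA; apply: eq_bigr => -[]. Qed.

Ltac expand := repeat progress rewrite ?sum_unit ?sum_pair ?sum_filt1 ?sum_w2 ?sum_bool ?sum_I2 ?prod_I2 ?w2_0 ?w2_1.

Lemma val_o1 : nat_of_ord o1 = 1%N. Proof. by []. Qed.

Section ToNS.
Variables (R : realType) (X Y S : finType) (M : nat) (Q : finType) (x0 : X).
Variable c : cscheme R X Y S M 2 Q.

Lemma enc0E (x : word 2 X) w s q xj :
  enc c ord0 x w s q xj = enc c ord0 (w2 x0 x0) w s q xj.
Proof. by apply: enc_causal => k //. Qed.
Lemma enc1E (x : word 2 X) w s q xj :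
  enc c o1 x w s q xj = enc c o1 (w2 (x ord0) x0) w s q xj.
Proof.
apply: enc_causal => // -[[|//] Hk] _.
by rewrite ffunE /=; congr (x _); apply/val_inj.
Qed.

Lemma encn_inner a w s q :
  \sum_(b : X) encn c (w2 a b) w s q = enc c ord0 (w2 x0 x0) w s q a.
Proof.
rewrite /encn; under eq_bigr => b _ do rewrite prod_I2 w2_0 w2_1 enc0E enc1E w2_0.
by rewrite -mulr_sumr enc_sum mulr1.
Qed.

Lemma encn_sum w s q : \sum_(x : word 2 X) encn c x w s q = 1.
Proof.
rewrite sum_w2; under eq_bigr => a _ do rewrite encn_inner.
exact: enc_sum.
Qed.

Lemma encn_filt (x : word 2 X) w s q :
  \sum_(x' : word 2 X | [forall k : 'I_2, (k < 1)%N ==> (x' k == x k)])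
     encn c x' w s q = enc c ord0 (w2 x0 x0) w s q (x ord0).
Proof. by rewrite sum_filt1 encn_inner. Qed.

Definition toZ (w : 'I_M) (s : word 2 S) (y : word 2 Y) (x : word 2 X) (w' : 'I_M) : R :=
  \sum_q PQ c q * (encn c x w s q * dec c y q w').

Lemma encn_ge0 x w s q : 0 <= encn c x w s q.
Proof. by apply: prodr_ge0 => j _; apply: enc_ge0. Qed.

Lemma toZ_ge0 w s y x w' : 0 <= toZ w s y x w'.
Proof.
apply: sumr_ge0 => q _; apply: mulr_ge0; first exact: PQ_ge0.
by apply: mulr_ge0; [apply: encn_ge0|apply: dec_ge0].
Qed.

Lemma toZ_sum w s y : \sum_x \sum_w' toZ w s y x w' = 1.
Proof.
rewrite /toZ.
under eq_bigr => x _ do rewrite exchange_big /=.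
rewrite exchange_big /= -(PQ_sum c); apply: eq_bigr => q _.
under eq_bigr => x _ do rewrite -mulr_sumr -mulr_sumr dec_sum mulr1.
by rewrite -mulr_sumr encn_sum mulr1.
Qed.

Lemma toZ_C1 w s y y' x :
  \sum_w' toZ w s y x w' = \sum_w' toZ w s y' x w'.
Proof.
rewrite /toZ exchange_big [RHS]exchange_big /=; apply: eq_bigr => q _.
by rewrite -!mulr_sumr !dec_sum.
Qed.

Lemma toZ_C2 w w' s s' y wh :
  \sum_x toZ w s y x wh = \sum_x toZ w' s' y x wh.
Proof.
rewrite /toZ exchange_big [RHS]exchange_big /=; apply: eq_bigr => q _.
by rewrite -!mulr_sumr -!mulr_suml !encn_sum.
Qed.

Lemma toZ_C3 (i : nat) : (0 < i)%N -> (i <= 2 - 1)%N ->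
  forall w (s s' : word 2 S) (y : word 2 Y) (x : word 2 X) wh,
  (forall k : 'I_2, (k < i)%N -> s k = s' k) ->
  \sum_(x' : word 2 X | [forall k : 'I_2, (k < i)%N ==> (x' k == x k)]) toZ w s y x' wh =
  \sum_(x' : word 2 X | [forall k : 'I_2, (k < i)%N ==> (x' k == x k)]) toZ w s' y x' wh.
Proof.
move=> i1 i2; have -> : i = 1%N by apply/eqP; rewrite eqn_leq i1 andbT.
move=> w s s' y x wh Hs.
rewrite /toZ exchange_big [RHS]exchange_big /=; apply: eq_bigr => q _.
rewrite -!mulr_sumr -!mulr_suml !encn_filt.
by congr (_ * (_ * _)); apply: enc_causal => // -[[|//] Hk] _; apply: Hs.
Qed.

Definition toNS : nsscheme R X Y S M 2 :=
  NSScheme toZ_ge0 toZ_sum toZ_C1 toZ_C2 toZ_C3.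

Lemma succ_toNS (PS : S -> R) (N : X -> S -> Y -> R) :
  succ_C PS N c = succ_NS PS N toNS.
Proof.
rewrite /succ_C /succ_NS /=; congr (_ * _); apply: eq_bigr => w _.
under eq_bigr => q _ do rewrite mulr_sumr.
rewrite exchange_big /=; apply: eq_bigr => x _.
under eq_bigr => q _ do rewrite mulr_sumr.
rewrite exchange_big /=; apply: eq_bigr => s _.
under eq_bigr => q _ do rewrite mulr_sumr.
rewrite exchange_big /=; apply: eq_bigr => y _.
rewrite /toZ mulr_sumr; apply: eq_bigr => q _.
ring.
Qed.

End ToNS.

Lemma Z_le1 (R : realType) (X Y S : finType) M n (Z : nsscheme R X Y S M n) w s y x w' :
  Zns Z w s y x w' <= 1.
Proof.
rewrite -(Z_sum Z w s y) (bigD1 x) //= (bigD1 w') //= -addrA lerDl.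
apply: addr_ge0; first by apply: sumr_ge0 => ? _; apply: Z_ge0.
by apply: sumr_ge0 => ? _; apply: sumr_ge0 => ? _; apply: Z_ge0.
Qed.

Lemma succ_NS_le (R : realType) (X Y S : finType) (PS : S -> R) (N : X -> S -> Y -> R)
  (hPS : forall s, 0 <= PS s <= 1) (hN : forall x s y, 0 <= N x s y <= 1) M n
  (Z : nsscheme R X Y S M n) :
  succ_NS PS N Z <= M%:R^-1 * \sum_(w : 'I_M) \sum_(x : word n X) \sum_(s : word n S)
     \sum_(y : word n Y) (1 : R).
Proof.
rewrite /succ_NS ler_wpM2l ?invr_ge0 ?ler0n //.
apply: ler_sum => w _; apply: ler_sum => x _; apply: ler_sum => s _; apply: ler_sum => y _.
have h1 : 0 <= PSn PS s <= 1.
  by rewrite prodr_ge0 ?prodr_ile1 // => i _; case/andP: (hPS (s i)).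
have h2 : 0 <= Nn N x s y <= 1.
  by rewrite prodr_ge0 ?prodr_ile1 // => i _; case/andP: (hN (x i) (s i) (y i)).
case/andP: h1 => h1 h1'; case/andP: h2 => h2 h2'.
have := Z_ge0 Z w s y x w; have := @Z_le1 _ _ _ _ _ _ Z w s y x w => h3 h3'.
by rewrite mulr_ile1 ?mulr_ge0 ?mulr_ile1.
Qed.

Lemma N_Z01_01 (R : realType) x s y : 0 <= N_Z01 R x s y <= 1.
Proof. by case: x s y => [] [] [] /=; rewrite ?mulr1n ?mulr0n ?lexx ?ler01 ?invr_ge0 ?invf_le1 ?ler0n ?ler1n. Qed.
Lemma csir_01 (R : realType) x s (y : bool * bool) : 0 <= csir (N_Z01 R) x s y <= 1.
Proof.
rewrite /csir; case/andP: (N_Z01_01 R x s y.1) => h1 h2.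
by case: (_ == _); rewrite ?mulr1n ?mulr0n ?mulr1 ?mulr0 ?lexx ?ler01 ?h1 ?h2.
Qed.
Lemma PS_Z01_01 (R : realType) s : 0 <= PS_Z01 R s <= 1.
Proof. by rewrite /PS_Z01 invr_ge0 ler0n invf_le1 ?ler1n. Qed.

Definition enc2 (R : realType) (j : 'I_2) (x : word 2 bool) (w : 'I_2) (s : word 2 bool)
  (q : unit) (xj : bool) : R := (xj == xorb (s j) (nat_of_ord w == 1%N))%:R.
Definition dbit (y : word 2 (bool * bool)%type) : bool :=
  ((y ord0).1 != (y ord0).2) || ((y o1).1 != (y o1).2).
Definition dec2 (R : realType) (y : word 2 (bool * bool)%type) (q : unit) (w' : 'I_2) : R :=
  ((nat_of_ord w' == 1%N) == dbit y)%:R.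

Section Sch.
Variable R : realType.
Lemma PQ1_ge0 (q : unit) : (0 : R) <= 1. Proof. exact: ler01. Qed.
Lemma PQ1_sum : \sum_(q : unit) (1 : R) = 1. Proof. by rewrite sum_unit. Qed.
Lemma enc2_ge0 j x w s q xj : 0 <= enc2 R j x w s q xj. Proof. exact: ler0n. Qed.
Lemma enc2_sum j x w s q : \sum_xj enc2 R j x w s q xj = 1.
Proof. by rewrite sum_bool /enc2; case: (xorb _ _) => /=; rewrite ?mulr1n ?mulr0n ?addr0 ?add0r. Qed.
Lemma enc2_causal (j : 'I_2) (x x' : word 2 bool) w (s s' : word 2 bool) q xj :
  (forall k : 'I_2, (k < j)%N -> x k = x' k) ->
  (forall k : 'I_2, (k <= j)%N -> s k = s' k) ->
  enc2 R j x w s q xj = enc2 R j x' w s' q xj.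
Proof. by move=> _ Hs; rewrite /enc2 Hs. Qed.
Lemma dec2_ge0 y q w' : 0 <= dec2 R y q w'. Proof. exact: ler0n. Qed.
Lemma dec2_sum y q : \sum_w' dec2 R y q w' = 1.
Proof. by rewrite sum_I2 /dec2 val_o1 /=; case: (dbit y); rewrite /= ?mulr1n ?mulr0n ?addr0 ?add0r. Qed.

Definition sch : cscheme R bool (bool * bool)%type bool 2 2 unit :=
  CScheme PQ1_ge0 PQ1_sum enc2_ge0 enc2_sum enc2_causal dec2_ge0 dec2_sum.
End Sch.

Definition xe (w : 'I_2) (s : word 2 bool) : word 2 bool :=
  w2 (xorb (s ord0) (nat_of_ord w == 1%N)) (xorb (s o1) (nat_of_ord w == 1%N)).

Lemma w2_eq (A : finType) (a b c d : A) : (w2 a b == w2 c d) = (a == c) && (b == d).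
Proof.
apply/eqP/andP => [E|[/eqP-> /eqP->]] //.
have := congr1 (fun f : word 2 A => f ord0) E; have := congr1 (fun f : word 2 A => f o1) E.
by rewrite /= !w2_0 !w2_1 => -> ->.
Qed.

Lemma encn_xe (R : realType) x w s :
  encn (sch R) x w s tt = (x == xe w s)%:R.
Proof.
rewrite /encn prod_I2 /= /enc2 -{3}(w2K x) /xe w2_eq.
by case: (x ord0) (x o1) (s ord0) (s o1) (nat_of_ord w == 1%N) => [] [] [] [] [];
  rewrite /= ?mulr1n ?mulr0n ?mulr1 ?mulr0.
Qed.

Lemma sum_xe (R : realType) (w : 'I_2) (s : word 2 bool) (a b : R) (G : word 2 bool -> R) :
  \sum_x a * encn (sch R) x w s tt * G x * b = a * G (xe w s) * b.
Proof.
rewrite (bigD1 (xe w s)) //= big1 ?addr0 ?encn_xe ?eqxx ?mulr1 //.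
by move=> x /negbTE; rewrite encn_xe => ->; rewrite mulr0 !mul0r.
Qed.

Lemma sch_val (R : realType) : succ_C (PS_Z01 R) (csir (N_Z01 R)) (sch R) = 7 / 8.
Proof.
rewrite /succ_C /=.
under eq_bigr => w _ do rewrite sum_unit mul1r exchange_big /=.
under eq_bigr => w _ do under eq_bigr => s _ do rewrite exchange_big /=.
under eq_bigr => w _ do under eq_bigr => s _ do under eq_bigr => y _ do rewrite sum_xe.
rewrite /PSn /Nn /xe /dec2 /dbit.
Time expand.
Time rewrite /csir ?val_o1 /PS_Z01 /N_Z01 /= ?mulr1n ?mulr0n ?mul0r ?mulr0 ?mul1r ?mulr1 ?add0r ?addr0.
Time rewrite ?mulr1n ?mulr0n ?mul0r ?mulr0 ?mul1r ?mulr1 ?add0r ?addr0.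
Time lra.
Qed.
Lemma part3 (R : realType) (Z : nsscheme R bool bool bool 2 2) :
  succ_NS (PS_Z01 R) (N_Z01 R) Z <= 13 / 16.
Proof.
rewrite /succ_NS /PSn /Nn. Time expand.
Time rewrite /PS_Z01 /N_Z01 /= ?mulr1n ?mulr0n ?mul0r ?mulr0 ?mul1r ?mulr1 ?add0r ?addr0.
move: (Z_sum Z ord0 (w2 false false) (w2 false true)); expand => h1.
move: (Z_sum Z ord0 (w2 false false) (w2 true true)); expand => h2.
move: (Z_sum Z ord0 (w2 false true) (w2 true true)); expand => h3.
move: (Z_sum Z ord0 (w2 true false) (w2 true true)); expand => h4.
move: (Z_sum Z ord0 (w2 true true) (w2 true true)); expand => h5.
move: (Z_sum Z o1 (w2 false false) (w2 false false)); expand => h6.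
move: (Z_sum Z o1 (w2 false false) (w2 false true)); expand => h7.
move: (Z_sum Z o1 (w2 false false) (w2 true false)); expand => h8.
move: (Z_sum Z o1 (w2 false false) (w2 true true)); expand => h9.
move: (Z_sum Z o1 (w2 false true) (w2 false false)); expand => h10.
move: (Z_sum Z o1 (w2 false true) (w2 false true)); expand => h11.
move: (Z_sum Z o1 (w2 false true) (w2 true true)); expand => h12.
move: (Z_sum Z o1 (w2 true false) (w2 true false)); expand => h13.
move: (Z_sum Z o1 (w2 true false) (w2 true true)); expand => h14.
move: (Z_sum Z o1 (w2 true true) (w2 false true)); expand => h15.
move: (Z_sum Z o1 (w2 true true) (w2 true false)); expand => h16.
move: (Z_sum Z o1 (w2 true true) (w2 true true)); expand => h17.
move: (Z_C1 Z ord0 (w2 false false) (w2 false true) (w2 false false) (w2 false false)); expand => h18.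
move: (Z_C1 Z ord0 (w2 false false) (w2 true true) (w2 false false) (w2 false false)); expand => h19.
move: (Z_C1 Z ord0 (w2 false false) (w2 false true) (w2 false false) (w2 false true)); expand => h20.
move: (Z_C1 Z ord0 (w2 false false) (w2 true true) (w2 false false) (w2 false true)); expand => h21.
move: (Z_C1 Z ord0 (w2 false false) (w2 false true) (w2 false false) (w2 true false)); expand => h22.
move: (Z_C1 Z ord0 (w2 false false) (w2 true false) (w2 false false) (w2 true false)); expand => h23.
move: (Z_C1 Z ord0 (w2 false false) (w2 true true) (w2 false false) (w2 true false)); expand => h24.
move: (Z_C1 Z ord0 (w2 false true) (w2 true true) (w2 false false) (w2 false false)); expand => h25.
move: (Z_C1 Z ord0 (w2 false true) (w2 false true) (w2 false false) (w2 false true)); expand => h26.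
move: (Z_C1 Z ord0 (w2 false true) (w2 true true) (w2 false false) (w2 false true)); expand => h27.
move: (Z_C1 Z ord0 (w2 false true) (w2 true false) (w2 false false) (w2 true false)); expand => h28.
move: (Z_C1 Z ord0 (w2 false true) (w2 true true) (w2 false false) (w2 true false)); expand => h29.
move: (Z_C1 Z ord0 (w2 true false) (w2 true true) (w2 false false) (w2 false false)); expand => h30.
move: (Z_C1 Z ord0 (w2 true false) (w2 false true) (w2 false false) (w2 false true)); expand => h31.
move: (Z_C1 Z ord0 (w2 true false) (w2 true true) (w2 false false) (w2 false true)); expand => h32.
move: (Z_C1 Z ord0 (w2 true false) (w2 true false) (w2 false false) (w2 true false)); expand => h33.
move: (Z_C1 Z ord0 (w2 true false) (w2 true true) (w2 false false) (w2 true false)); expand => h34.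
move: (Z_C1 Z ord0 (w2 true true) (w2 true true) (w2 false false) (w2 false false)); expand => h35.
move: (Z_C1 Z ord0 (w2 true true) (w2 false true) (w2 false false) (w2 false true)); expand => h36.
move: (Z_C1 Z ord0 (w2 true true) (w2 true true) (w2 false false) (w2 false true)); expand => h37.
move: (Z_C1 Z ord0 (w2 true true) (w2 true false) (w2 false false) (w2 true false)); expand => h38.
move: (Z_C1 Z ord0 (w2 true true) (w2 true true) (w2 false false) (w2 true false)); expand => h39.
move: (Z_C1 Z o1 (w2 false false) (w2 false true) (w2 false false) (w2 false false)); expand => h40.
move: (Z_C1 Z o1 (w2 false false) (w2 true true) (w2 false false) (w2 false false)); expand => h41.
move: (Z_C1 Z o1 (w2 false false) (w2 false true) (w2 false false) (w2 false true)); expand => h42.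
move: (Z_C1 Z o1 (w2 false false) (w2 true true) (w2 false false) (w2 false true)); expand => h43.
move: (Z_C1 Z o1 (w2 false false) (w2 false true) (w2 false false) (w2 true false)); expand => h44.
move: (Z_C1 Z o1 (w2 false false) (w2 true false) (w2 false false) (w2 true false)); expand => h45.
move: (Z_C1 Z o1 (w2 false false) (w2 true true) (w2 false false) (w2 true false)); expand => h46.
move: (Z_C1 Z o1 (w2 false true) (w2 true true) (w2 false false) (w2 false false)); expand => h47.
move: (Z_C1 Z o1 (w2 false true) (w2 false true) (w2 false false) (w2 false true)); expand => h48.
move: (Z_C1 Z o1 (w2 false true) (w2 true true) (w2 false false) (w2 false true)); expand => h49.
move: (Z_C1 Z o1 (w2 false true) (w2 true false) (w2 false false) (w2 true false)); expand => h50.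
move: (Z_C1 Z o1 (w2 false true) (w2 true true) (w2 false false) (w2 true false)); expand => h51.
move: (Z_C1 Z o1 (w2 true false) (w2 true true) (w2 false false) (w2 false false)); expand => h52.
move: (Z_C1 Z o1 (w2 true false) (w2 false true) (w2 false false) (w2 false true)); expand => h53.
move: (Z_C1 Z o1 (w2 true false) (w2 true true) (w2 false false) (w2 false true)); expand => h54.
move: (Z_C1 Z o1 (w2 true false) (w2 true false) (w2 false false) (w2 true false)); expand => h55.
move: (Z_C1 Z o1 (w2 true false) (w2 true true) (w2 false false) (w2 true false)); expand => h56.
move: (Z_C1 Z o1 (w2 true true) (w2 true true) (w2 false false) (w2 false false)); expand => h57.
move: (Z_C1 Z o1 (w2 true true) (w2 false true) (w2 false false) (w2 false true)); expand => h58.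
move: (Z_C1 Z o1 (w2 true true) (w2 true true) (w2 false false) (w2 false true)); expand => h59.
move: (Z_C1 Z o1 (w2 true true) (w2 true false) (w2 false false) (w2 true false)); expand => h60.
move: (Z_C1 Z o1 (w2 true true) (w2 true true) (w2 false false) (w2 true false)); expand => h61.
move: (Z_C2 Z ord0 ord0 (w2 false true) (w2 false false) (w2 false false) ord0); expand => h62.
move: (Z_C2 Z o1 ord0 (w2 false false) (w2 false false) (w2 false false) ord0); expand => h63.
move: (Z_C2 Z o1 ord0 (w2 false true) (w2 false false) (w2 false false) ord0); expand => h64.
move: (Z_C2 Z ord0 ord0 (w2 false true) (w2 false false) (w2 false true) ord0); expand => h65.
move: (Z_C2 Z ord0 ord0 (w2 true false) (w2 false false) (w2 false true) ord0); expand => h66.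
move: (Z_C2 Z o1 ord0 (w2 false true) (w2 false false) (w2 false true) ord0); expand => h67.
move: (Z_C2 Z o1 ord0 (w2 true true) (w2 false false) (w2 false true) ord0); expand => h68.
move: (Z_C2 Z ord0 ord0 (w2 true false) (w2 false false) (w2 true false) ord0); expand => h69.
move: (Z_C2 Z o1 ord0 (w2 false false) (w2 false false) (w2 true false) ord0); expand => h70.
move: (Z_C2 Z o1 ord0 (w2 true false) (w2 false false) (w2 true false) ord0); expand => h71.
move: (Z_C2 Z o1 ord0 (w2 true true) (w2 false false) (w2 true false) ord0); expand => h72.
move: (Z_C2 Z ord0 ord0 (w2 true false) (w2 false false) (w2 true true) ord0); expand => h73.
move: (Z_C2 Z ord0 ord0 (w2 true true) (w2 false false) (w2 true true) ord0); expand => h74.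
move: (Z_C2 Z o1 ord0 (w2 true true) (w2 false false) (w2 true true) ord0); expand => h75.
move: (@Z_C3 _ _ _ _ _ _ Z 1%N isT isT ord0 (w2 false true) (w2 false false) (w2 false false) (w2 false false) ord0 (@C3h _ _ _ _)); expand => h76.
move: (@Z_C3 _ _ _ _ _ _ Z 1%N isT isT ord0 (w2 true true) (w2 true false) (w2 false false) (w2 false false) ord0 (@C3h _ _ _ _)); expand => h77.
move: (@Z_C3 _ _ _ _ _ _ Z 1%N isT isT ord0 (w2 true true) (w2 true false) (w2 false false) (w2 false false) o1 (@C3h _ _ _ _)); expand => h78.
move: (@Z_C3 _ _ _ _ _ _ Z 1%N isT isT ord0 (w2 true true) (w2 true false) (w2 false true) (w2 false false) ord0 (@C3h _ _ _ _)); expand => h79.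
move: (@Z_C3 _ _ _ _ _ _ Z 1%N isT isT ord0 (w2 true true) (w2 true false) (w2 true false) (w2 false false) ord0 (@C3h _ _ _ _)); expand => h80.
move: (@Z_C3 _ _ _ _ _ _ Z 1%N isT isT o1 (w2 false true) (w2 false false) (w2 false false) (w2 false false) o1 (@C3h _ _ _ _)); expand => h81.
move: (@Z_C3 _ _ _ _ _ _ Z 1%N isT isT o1 (w2 true true) (w2 true false) (w2 false false) (w2 false false) ord0 (@C3h _ _ _ _)); expand => h82.
move: (@Z_C3 _ _ _ _ _ _ Z 1%N isT isT o1 (w2 true true) (w2 true false) (w2 false false) (w2 false false) o1 (@C3h _ _ _ _)); expand => h83.
move: (@Z_C3 _ _ _ _ _ _ Z 1%N isT isT o1 (w2 true true) (w2 true false) (w2 true true) (w2 false false) ord0 (@C3h _ _ _ _)); expand => h84.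
have p0 := Z_ge0 Z ord0 (w2 false false) (w2 false false) (w2 false false) o1.
have p1 := Z_ge0 Z ord0 (w2 false false) (w2 false false) (w2 true false) o1.
have p2 := Z_ge0 Z ord0 (w2 false false) (w2 false true) (w2 false true) o1.
have p3 := Z_ge0 Z ord0 (w2 false false) (w2 false true) (w2 true true) o1.
have p4 := Z_ge0 Z ord0 (w2 false false) (w2 true false) (w2 false false) ord0.
have p5 := Z_ge0 Z ord0 (w2 false false) (w2 true false) (w2 false true) ord0.
have p6 := Z_ge0 Z ord0 (w2 false false) (w2 true false) (w2 true false) o1.
have p7 := Z_ge0 Z ord0 (w2 false false) (w2 true true) (w2 true true) o1.
have p8 := Z_ge0 Z ord0 (w2 false true) (w2 false false) (w2 false false) o1.
have p9 := Z_ge0 Z ord0 (w2 false true) (w2 false false) (w2 true true) ord0.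
have p10 := Z_ge0 Z ord0 (w2 false true) (w2 false true) (w2 false true) o1.
have p11 := Z_ge0 Z ord0 (w2 false true) (w2 false true) (w2 true false) ord0.
have p12 := Z_ge0 Z ord0 (w2 false true) (w2 true false) (w2 true false) o1.
have p13 := Z_ge0 Z ord0 (w2 false true) (w2 true true) (w2 true false) o1.
have p14 := Z_ge0 Z ord0 (w2 false true) (w2 true true) (w2 true true) o1.
have p15 := Z_ge0 Z ord0 (w2 true false) (w2 false false) (w2 false false) o1.
have p16 := Z_ge0 Z ord0 (w2 true false) (w2 false false) (w2 false true) o1.
have p17 := Z_ge0 Z ord0 (w2 true false) (w2 false true) (w2 false true) o1.
have p18 := Z_ge0 Z ord0 (w2 true false) (w2 false true) (w2 true false) ord0.
have p19 := Z_ge0 Z ord0 (w2 true false) (w2 false true) (w2 true true) ord0.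
have p20 := Z_ge0 Z ord0 (w2 true false) (w2 true false) (w2 false true) ord0.
have p21 := Z_ge0 Z ord0 (w2 true false) (w2 true false) (w2 true false) o1.
have p22 := Z_ge0 Z ord0 (w2 true false) (w2 true false) (w2 true true) ord0.
have p23 := Z_ge0 Z ord0 (w2 true false) (w2 true true) (w2 false false) ord0.
have p24 := Z_ge0 Z ord0 (w2 true false) (w2 true true) (w2 true false) ord0.
have p25 := Z_ge0 Z ord0 (w2 true false) (w2 true true) (w2 true true) o1.
have p26 := Z_ge0 Z ord0 (w2 true true) (w2 false false) (w2 false false) o1.
have p27 := Z_ge0 Z ord0 (w2 true true) (w2 false true) (w2 false true) o1.
have p28 := Z_ge0 Z ord0 (w2 true true) (w2 true false) (w2 false true) ord0.
have p29 := Z_ge0 Z ord0 (w2 true true) (w2 true false) (w2 true false) o1.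
have p30 := Z_ge0 Z ord0 (w2 true true) (w2 true true) (w2 false false) ord0.
have p31 := Z_ge0 Z ord0 (w2 true true) (w2 true true) (w2 true true) o1.
have p32 := Z_ge0 Z o1 (w2 false false) (w2 false false) (w2 false false) ord0.
have p33 := Z_ge0 Z o1 (w2 false false) (w2 false false) (w2 true false) ord0.
have p34 := Z_ge0 Z o1 (w2 false false) (w2 false true) (w2 false true) ord0.
have p35 := Z_ge0 Z o1 (w2 false false) (w2 false true) (w2 true true) ord0.
have p36 := Z_ge0 Z o1 (w2 false false) (w2 true false) (w2 false false) o1.
have p37 := Z_ge0 Z o1 (w2 false false) (w2 true false) (w2 false true) o1.
have p38 := Z_ge0 Z o1 (w2 false false) (w2 true false) (w2 true false) ord0.
have p39 := Z_ge0 Z o1 (w2 false false) (w2 true true) (w2 true true) ord0.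
have p40 := Z_ge0 Z o1 (w2 false true) (w2 false false) (w2 false false) ord0.
have p41 := Z_ge0 Z o1 (w2 false true) (w2 false false) (w2 true true) o1.
have p42 := Z_ge0 Z o1 (w2 false true) (w2 false true) (w2 false true) ord0.
have p43 := Z_ge0 Z o1 (w2 false true) (w2 false true) (w2 true false) o1.
have p44 := Z_ge0 Z o1 (w2 false true) (w2 true false) (w2 true false) ord0.
have p45 := Z_ge0 Z o1 (w2 false true) (w2 true true) (w2 true false) ord0.
have p46 := Z_ge0 Z o1 (w2 false true) (w2 true true) (w2 true true) ord0.
have p47 := Z_ge0 Z o1 (w2 true false) (w2 false false) (w2 false false) ord0.
have p48 := Z_ge0 Z o1 (w2 true false) (w2 false false) (w2 false true) ord0.
have p49 := Z_ge0 Z o1 (w2 true false) (w2 false true) (w2 false true) ord0.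
have p50 := Z_ge0 Z o1 (w2 true false) (w2 true false) (w2 false true) o1.
have p51 := Z_ge0 Z o1 (w2 true false) (w2 true false) (w2 true false) ord0.
have p52 := Z_ge0 Z o1 (w2 true false) (w2 true true) (w2 false false) o1.
have p53 := Z_ge0 Z o1 (w2 true false) (w2 true true) (w2 true true) ord0.
have p54 := Z_ge0 Z o1 (w2 true true) (w2 false false) (w2 false false) ord0.
have p55 := Z_ge0 Z o1 (w2 true true) (w2 false true) (w2 false true) ord0.
have p56 := Z_ge0 Z o1 (w2 true true) (w2 false true) (w2 true false) o1.
have p57 := Z_ge0 Z o1 (w2 true true) (w2 false true) (w2 true true) o1.
have p58 := Z_ge0 Z o1 (w2 true true) (w2 true false) (w2 false true) o1.
have p59 := Z_ge0 Z o1 (w2 true true) (w2 true false) (w2 true false) ord0.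
have p60 := Z_ge0 Z o1 (w2 true true) (w2 true false) (w2 true true) o1.
have p61 := Z_ge0 Z o1 (w2 true true) (w2 true true) (w2 false false) o1.
have p62 := Z_ge0 Z o1 (w2 true true) (w2 true true) (w2 true false) o1.
have p63 := Z_ge0 Z o1 (w2 true true) (w2 true true) (w2 true true) ord0.
Time lra.
Qed.

Theorem theorem2 (R : realType) :
  eta_C_opt (PS_Z01 R) (csir (N_Z01 R)) 2 2
    <= eta_NS_opt (PS_Z01 R) (csir (N_Z01 R)) 2 2 /\
  7 / 8 <= eta_C_opt (PS_Z01 R) (csir (N_Z01 R)) 2 2 /\
  eta_NS_opt (PS_Z01 R) (N_Z01 R) 2 2 <= 13 / 16.
Proof.
rewrite /eta_C_opt /eta_NS_opt.
have ub := succ_NS_le _ _ _ _ _ _ (@PS_Z01_01 R) (@csir_01 R).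
have e78 : 7 / 8 = succ_NS (PS_Z01 R) (csir (N_Z01 R)) (@toNS _ _ _ _ _ _ false (sch R)).
  by rewrite -succ_toNS sch_val.
have hsNS : has_sup [set r | exists Z : nsscheme R bool (bool * bool)%type bool 2 2,
            r = succ_NS (PS_Z01 R) (csir (N_Z01 R)) Z]%classic.
  split; first by exists (7/8); exists (@toNS _ _ _ _ _ _ false (sch R)).
  by eexists => r [Z ->]; apply: ub.
split; last split.
- apply: sup_le => //; last by exists (7/8), unit, (sch R); rewrite sch_val.
  move=> r [Q [c ->]]; exists (succ_NS (PS_Z01 R) (csir (N_Z01 R)) (@toNS _ _ _ _ _ _ false c)).
  by split => //; [exists (@toNS _ _ _ _ _ _ false c) | rewrite (@succ_toNS _ _ _ _ _ _ false)].
- apply: sup_upper_bound; last by exists unit, (sch R); rewrite sch_val.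
  split; first by exists (7/8), unit, (sch R); rewrite sch_val.
  by eexists => r [Q [c ->]]; rewrite (@succ_toNS _ _ _ _ _ _ false); apply: ub.
- case: (pselect ([set r | exists Z : nsscheme R bool bool bool 2 2,
                r = succ_NS (PS_Z01 R) (N_Z01 R) Z] !=set0)%classic) => [neA|nA].
    by apply: ge_sup => // r [Z ->]; apply: part3.
  have -> : [set r | exists Z : nsscheme R bool bool bool 2 2,
                r = succ_NS (PS_Z01 R) (N_Z01 R) Z]%classic = set0.
    by apply/eqP; apply: contra_notT nA => /set0P.
  by rewrite sup0; lra.
Qed.
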